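(* Every strip $S\subset\mathbb{R}^2$ is foliated homeomorphic to a model strip; that is, there exist a model strip $S'$ and a homeomorphism $h:S\to S'$ mapping each leaf of the canonical foliation of $S$ onto a leaf of the canonical foliation of $S'$.
   Context: A subset $S\subset\mathbb{R}^2$ is a strip if for some real numbers $u<v$ one has $\mathbb{R}\times(u,v)\subset S\subset\mathbb{R}\times[u,v]$ and $S$ is open in the topology of $\mathbb{R}\times[u,v]$. Put $\partial_-S=S\cap(\mathbb{R}\times\{u\})$, $\partial_+S=S\cap(\mathbb{R}\times\{v\})$, $\partial S=\partial_-S\cup\partial_+S$; $\partial S$ is a disjoint union of at most countably many open (possibly unbounded) horizontal intervals, called boundary intervals. A strip is a model strip if in addition every connected component of $\partial S$ is a bounded interval and the closures in $\mathbb{R}\times[u,v]$ of distinct boundary intervals are mutually disjoint. The canonical foliation of a strip $S$ has as leaves the horizontal lines $\mathbb{R}\times\{t\}$, $t\in(u,v)$, and the boundary intervals of $\partial S$. A homeomorphism between foliated surfaces is foliated if it maps each leaf onto a leaf. *)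

(* Defs.v *)
From Stdlib Require Import Reals.
Open Scope R_scope.

Definition pt := (R * R)%type.

Definition dist2 (p q : pt) : R :=
  sqrt ((fst p - fst q)^2 + (snd p - snd q)^2).

Definition band (u v : R) (p : pt) : Prop := u <= snd p <= v.

Definition is_strip (S : pt -> Prop) (u v : R) : Prop :=
  u < v /\
  (forall p : pt, u < snd p < v -> S p) /\
  (forall p : pt, S p -> band u v p) /\
  (forall p : pt, S p -> exists eps, 0 < eps /\
      forall q : pt, band u v q -> dist2 p q < eps -> S q).

Definition is_interval (I : R -> Prop) : Prop :=
  forall a b x, I a -> I b -> a <= x <= b -> I x.

(* L is a boundary interval of the strip S (with bounds u,v):
   a connected component of dS = S n (R x {u,v}), i.e. a maximal
   nonempty horizontal interval {c} x I contained in S, c in {u,v}. *)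
Definition boundary_interval (S : pt -> Prop) (u v : R) (L : pt -> Prop) : Prop :=
  exists (c : R) (I : R -> Prop),
    (c = u \/ c = v) /\
    is_interval I /\
    (exists x, I x) /\
    (forall x, I x -> S (x, c)) /\
    (forall J : R -> Prop, is_interval J -> (forall x, I x -> J x) ->
        (forall x, J x -> S (x, c)) -> forall x, J x -> I x) /\
    (forall p : pt, L p <-> (snd p = c /\ I (fst p))).

Definition leaf (S : pt -> Prop) (u v : R) (L : pt -> Prop) : Prop :=
  (exists t, u < t < v /\ forall p : pt, L p <-> snd p = t) \/
  boundary_interval S u v L.

Definition band_closure (u v : R) (A : pt -> Prop) (p : pt) : Prop :=
  band u v p /\ forall eps, 0 < eps -> exists q, A q /\ dist2 p q < eps.

Definition is_model_strip (S : pt -> Prop) (u v : R) : Prop :=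
  is_strip S u v /\
  (forall L, boundary_interval S u v L ->
     exists M, forall p, L p -> Rabs (fst p) <= M) /\
  (forall L1 L2, boundary_interval S u v L1 -> boundary_interval S u v L2 ->
     (exists p, L1 p /\ ~ L2 p \/ L2 p /\ ~ L1 p) ->
     forall p, ~ (band_closure u v L1 p /\ band_closure u v L2 p)).

Definition continuous_on (A : pt -> Prop) (f : pt -> pt) : Prop :=
  forall p, A p -> forall eps, 0 < eps -> exists delta, 0 < delta /\
    forall q, A q -> dist2 p q < delta -> dist2 (f p) (f q) < eps.

Definition homeomorphism (A B : pt -> Prop) (h g : pt -> pt) : Prop :=
  (forall p, A p -> B (h p)) /\
  (forall q, B q -> A (g q)) /\
  (forall p, A p -> g (h p) = p) /\
  (forall q, B q -> h (g q) = q) /\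
  continuous_on A h /\ continuous_on B g.

(* Main.v *)
From Stdlib Require Import Reals Lra Lia ClassicalEpsilon Classical Cantor ZArith.
From Coquelicot Require Import Coquelicot.
Require Import Defs.
From Stdlib Require Import Reals.
Open Scope R_scope.

Definition w (n : nat) : R := (/2)^n.

Lemma w_pos n : 0 < w n.
Proof. unfold w. apply pow_lt. lra. Qed.

Lemma w_le1 n : w n <= 1.
Proof. unfold w. induction n; simpl; lra. Qed.

Lemma is_series_w : is_series w 2.
Proof.
  replace 2 with (/ (1 - /2)) by field. apply is_series_geom.
  rewrite Rabs_pos_eq; lra.
Qed.

Lemma ex_series_w : ex_series w.
Proof. exists 2. apply is_series_w. Qed.

Lemma Series_w : Series w = 2.
Proof. apply is_series_unique, is_series_w. Qed.

Lemma ex_series_bounded (d : nat -> R) : (forall n, Rabs (d n) <= w n) -> ex_series d.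
Proof.
  intros H. apply (ex_series_le d w); [|apply ex_series_w].
  intros n. apply H.
Qed.

Lemma Series_zero : Series (fun _ => 0) = 0.
Proof.
  rewrite (Series_ext _ (fun n => 0 * w n)); [|intros; ring].
  rewrite Series_scal_l. ring.
Qed.

Lemma Series_nonneg (a : nat -> R) : (forall n, 0 <= a n) -> ex_series a -> 0 <= Series a.
Proof.
  intros H E. rewrite <- Series_zero. apply Series_le; auto. intros; split; [lra|auto].
Qed.

Lemma sum_ge_last (d : nat -> R) n : (forall m, 0 <= d m) -> d n <= sum_f_R0 d n.
Proof.
  intros H. destruct n; simpl. lra.
  pose proof (cond_pos_sum d n H). lra.
Qed.

Lemma Series_ge_term (d : nat -> R) n : (forall m, 0 <= d m) -> ex_series d -> d n <= Series d.
Proof.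
  intros H E. rewrite (Series_incr_n d (S n)); [|lia|auto]. simpl Init.Nat.pred.
  pose proof (sum_ge_last d n H).
  assert (0 <= Series (fun k => d (S n + k)%nat)).
  { apply Series_nonneg. intros; apply H.
    apply (ex_series_incr_n d (S n)) in E. exact E. }
  lra.
Qed.

Lemma ex_wc (c : nat -> R) : (forall n, 0 <= c n <= 1) -> ex_series (fun n => w n * c n).
Proof.
  intros H. apply ex_series_bounded. intros n. pose proof (w_pos n). specialize (H n).
  rewrite Rabs_pos_eq; nra.
Qed.

Lemma ser_bounds (c : nat -> R) : (forall n, 0 <= c n <= 1) ->
  0 <= Series (fun n => w n * c n) <= 2.
Proof.
  intros H. split.
  - apply Series_nonneg; [|apply ex_wc; auto]. intros n. pose proof (w_pos n). specialize (H n). nra.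
  - rewrite <- Series_w. apply Series_le; [|apply ex_series_w]. intros n.
    pose proof (w_pos n). specialize (H n). nra.
Qed.

Lemma ser_mono (c c' : nat -> R) : (forall n, 0 <= c n <= c' n /\ c' n <= 1) ->
  Series (fun n => w n * c n) <= Series (fun n => w n * c' n).
Proof.
  intros H. apply Series_le; [|apply ex_wc; intros n; specialize (H n); lra].
  intros n. pose proof (w_pos n). specialize (H n). nra.
Qed.

Lemma ser_jump (c c' : nat -> R) n0 : (forall n, 0 <= c n <= c' n /\ c' n <= 1) ->
  c n0 = 0 -> c' n0 = 1 ->
  Series (fun n => w n * c n) + w n0 <= Series (fun n => w n * c' n).
Proof.
  intros H H0 H1.
  assert (E1 : ex_series (fun n => w n * c n)) by (apply ex_wc; intros n; specialize (H n); lra).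
  assert (E2 : ex_series (fun n => w n * c' n)) by (apply ex_wc; intros n; specialize (H n); lra).
  assert (Series (fun n => w n * c' n - w n * c n) >= w n0).
  { apply Rle_ge. replace (w n0) with (w n0 * c' n0 - w n0 * c n0) by (rewrite H0, H1; ring).
    apply (Series_ge_term (fun n => w n * c' n - w n * c n)).
    intros m. pose proof (w_pos m). specialize (H m). nra.
    apply ex_series_bounded. intros m. pose proof (w_pos m). specialize (H m).
    rewrite <- Rmult_minus_distr_l, Rabs_mult, (Rabs_pos_eq (w m)) by lra.
    assert (Rabs (c' m - c m) <= 1) by (apply Rabs_le; lra). nra. }
  rewrite Series_minus in H2; auto. lra.
Qed.

Lemma sum_const_bound (d : nat -> R) N eta : (forall m, (m <= N)%nat -> d m <= eta) ->
  sum_f_R0 d N <= INR (S N) * eta.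
Proof.
  induction N; intros H.
  - specialize (H 0%nat (le_n _)). simpl. lra.
  - assert (sum_f_R0 d N <= INR (S N) * eta) by (apply IHN; intros; apply H; lia).
    specialize (H (S N) (le_n _)). rewrite (S_INR (S N)). change (sum_f_R0 d (S N)) with (sum_f_R0 d N + d (S N)). lra.
Qed.

Lemma ser_diff (c c' : nat -> R) N eta : (forall n, 0 <= c n <= 1) -> (forall n, 0 <= c' n <= 1) ->
  (forall m, (m <= N)%nat -> Rabs (c m - c' m) <= eta) ->
  Rabs (Series (fun n => w n * c n) - Series (fun n => w n * c' n)) <= INR (S N) * eta + 2 * w (S N).
Proof.
  intros Hc Hc' H.
  assert (E1 := ex_wc c Hc). assert (E2 := ex_wc c' Hc').
  rewrite <- Series_minus; auto.
  set (d := fun n => w n * c n - w n * c' n).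
  assert (Hd : forall n, Rabs (d n) <= w n).
  { intros n. unfold d. specialize (Hc n); specialize (Hc' n). pose proof (w_pos n).
    rewrite <- Rmult_minus_distr_l, Rabs_mult, (Rabs_pos_eq (w n)) by lra.
    assert (Rabs (c n - c' n) <= 1) by (apply Rabs_le; lra). nra. }
  assert (EA : ex_series (fun n => Rabs (d n))).
  { apply ex_series_bounded. intros n. rewrite Rabs_Rabsolu. auto. }
  eapply Rle_trans. apply Series_Rabs; auto.
  rewrite (Series_incr_n _ (S N)); [|lia|auto]. simpl Init.Nat.pred.
  apply Rplus_le_compat.
  - apply sum_const_bound. intros m Hm. unfold d.
    rewrite <- Rmult_minus_distr_l, Rabs_mult, (Rabs_pos_eq (w m)) by (pose proof (w_pos m); lra).
    specialize (H m Hm). pose proof (w_pos m). pose proof (w_le1 m).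
    pose proof (Rabs_pos (c m - c' m)). nra.
  - replace (2 * w (S N)) with (Series (fun k => w (S N + k)%nat)).
    + apply Series_le. intros k. split; [apply Rabs_pos| apply Hd].
      apply (ex_series_incr_n w (S N)), ex_series_w.
    + rewrite (Series_ext _ (fun k => w (S N) * w k)).
      rewrite Series_scal_l, Series_w. ring.
      intros k. unfold w. rewrite pow_add. ring.
Qed.

Definition qn (n : nat) : R :=
  let p := Cantor.of_nat n in let p2 := Cantor.of_nat (snd p) in
  (INR (fst p) - INR (fst p2)) / INR (S (snd p2)).

Lemma IZR_le_INR z : IZR z <= INR (Z.to_nat z).
Proof.
  destruct (Z.le_gt_cases 0 z).
  - rewrite INR_IZR_INZ, Z2Nat.id; [lra|lia].
  - pose proof (pos_INR (Z.to_nat z)). apply IZR_lt in H. lra.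
Qed.

Lemma IZR_split k : IZR k = INR (Z.to_nat k) - INR (Z.to_nat (- k)).
Proof.
  destruct k; simpl.
  - lra.
  - rewrite INR_IZR_INZ, positive_nat_Z. lra.
  - rewrite INR_IZR_INZ, positive_nat_Z. rewrite <- Pos2Z.opp_pos. rewrite opp_IZR. lra.
Qed.

Lemma qn_dense x d : 0 < d -> exists n, x < qn n < x + d.
Proof.
  intros Hd.
  set (c := Z.to_nat (up (/ d))).
  assert (Hc : / d < INR (S c)).
  { pose proof (archimed (/ d)) as [H1 _]. pose proof (IZR_le_INR (up (/d))).
    rewrite S_INR. unfold c. lra. }
  set (M := INR (S c)).
  assert (HM : 0 < M) by (unfold M; apply lt_0_INR; lia).
  set (k := up (x * M)).
  pose proof (archimed (x * M)) as [H1 H2]. fold k in H1, H2.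
  exists (Cantor.to_nat (Z.to_nat k, Cantor.to_nat (Z.to_nat (- k), c))).
  unfold qn. rewrite Cantor.cancel_of_to; cbn [fst snd]; rewrite Cantor.cancel_of_to; cbn [fst snd].
  rewrite <- IZR_split. fold M.
  assert (/ M < d).
  { rewrite <- (Rinv_inv d). apply Rinv_lt_contravar; [|exact Hc].
    apply Rmult_lt_0_compat; auto. apply Rinv_0_lt_compat; lra. }
  split.
  - apply (Rmult_lt_reg_r M); auto. unfold Rdiv. rewrite Rmult_assoc, Rinv_l by lra. lra.
  - apply (Rmult_lt_reg_r M); auto. unfold Rdiv. rewrite Rmult_assoc, Rinv_l by lra.
    assert (d * M > 1). { apply (Rmult_lt_reg_r (/M)). apply Rinv_0_lt_compat; lra.
      rewrite Rmult_assoc, Rinv_r, Rmult_1_r, Rmult_1_l by lra. lra. }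
    lra.
Qed.

Definition openR (O : R -> Prop) := forall x, O x -> exists d, 0 < d /\ forall y, Rabs (y - x) < d -> O y.

Definition has_rend (O : R -> Prop) (q : R) := O q /\ exists z, q <= z /\ ~ O z.
Definition rend_set (O : R -> Prop) (q : R) (t : R) := q <= t /\ forall y, q <= y <= t -> O y.

Lemma rend_ex O q : has_rend O q -> {a | is_lub (rend_set O q) a}.
Proof.
  intros [Hq Hz]. apply completeness.
  - destruct Hz as [z [Hz1 Hz2]]. exists z. intros t [Ht1 Ht2].
    destruct (Rle_lt_dec t z); auto. exfalso. apply Hz2, Ht2. lra.
  - exists q. split. lra. intros y Hy. replace y with q by lra. auto.
Qed.

Definition rend (O : R -> Prop) (q : R) : R :=
  match excluded_middle_informative (has_rend O q) with
  | left H => proj1_sig (rend_ex O q H)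
  | right _ => 0 end.

Section Rend.
Variable O : R -> Prop.
Hypothesis Oop : openR O.
Variable q : R.
Hypothesis Hq : has_rend O q.

Lemma rend_lub : is_lub (rend_set O q) (rend O q).
Proof.
  unfold rend. destruct (excluded_middle_informative (has_rend O q)); [|tauto].
  apply proj2_sig.
Qed.

Lemma rend_R3 : forall y, q <= y < rend O q -> O y.
Proof.
  intros y Hy. destruct rend_lub as [Hub Hl].
  destruct (classic (exists t, rend_set O q t /\ y <= t)) as [[t [[Ht1 Ht2] Hyt]]|Hn].
  - apply Ht2. lra.
  - exfalso. assert (rend O q <= y).
    { apply Hl. intros t Ht. destruct (Rle_lt_dec t y); auto. exfalso. apply Hn. exists t. split; auto; lra. }
    lra.
Qed.

Lemma rend_R4 : forall z, q <= z -> ~ O z -> rend O q <= z.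
Proof.
  intros z Hz HO. destruct rend_lub as [Hub Hl]. apply Hl.
  intros t [Ht1 Ht2]. destruct (Rle_lt_dec t z); auto. exfalso. apply HO, Ht2. lra.
Qed.

Lemma rend_R2 : q < rend O q.
Proof.
  destruct Hq as [HOq _]. destruct (Oop q HOq) as [d [Hd Hd2]].
  destruct rend_lub as [Hub Hl].
  assert (rend_set O q (q + d/2)).
  { split. lra. intros y Hy. apply Hd2. apply Rabs_def1; lra. }
  specialize (Hub _ H). lra.
Qed.

Lemma rend_R1 : ~ O (rend O q).
Proof.
  intros HO. destruct (Oop _ HO) as [d [Hd Hd2]].
  destruct rend_lub as [Hub Hl]. pose proof rend_R2.
  assert (rend_set O q (rend O q + d/2)).
  { split. lra. intros y Hy. destruct (Rlt_le_dec y (rend O q)).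
    - apply rend_R3; lra.
    - apply Hd2. apply Rabs_def1; lra. }
  specialize (Hub _ H0). lra.
Qed.
End Rend.

Definition clamp01 (s : R) := Rmin 1 (Rmax 0 s).
Definition Hs (e s : R) : R :=
  if Rlt_dec 0 e then clamp01 (s / e) else if Rlt_dec 0 s then 1 else 0.

Lemma clamp_range s : 0 <= clamp01 s <= 1.
Proof. unfold clamp01, Rmin, Rmax. repeat destruct Rle_dec; lra. Qed.

Lemma clamp_mono s s' : s <= s' -> clamp01 s <= clamp01 s'.
Proof. intros. unfold clamp01, Rmin, Rmax. repeat destruct Rle_dec; lra. Qed.

Lemma clamp_lip a b : Rabs (clamp01 a - clamp01 b) <= Rabs (a - b).
Proof.
  unfold clamp01, Rmin, Rmax. 
  destruct (Rle_dec 0 a); destruct (Rle_dec 0 b); repeat destruct Rle_dec;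
  unfold Rabs; repeat destruct Rcase_abs; lra.
Qed.

Lemma Hs_range e s : 0 <= Hs e s <= 1.
Proof. unfold Hs. destruct Rlt_dec. apply clamp_range. destruct Rlt_dec; lra. Qed.

Lemma Hs_mono e s s' : s <= s' -> Hs e s <= Hs e s'.
Proof.
  intros H. unfold Hs. destruct Rlt_dec.
  - apply clamp_mono. unfold Rdiv. apply Rmult_le_compat_r; auto. left; apply Rinv_0_lt_compat; auto.
  - repeat destruct Rlt_dec; lra.
Qed.

Lemma Hs_cont e0 s0 : (0 < e0 \/ (e0 = 0 /\ s0 <> 0)) ->
  forall eps, 0 < eps -> exists d, 0 < d /\ forall e s, 0 <= e -> Rabs (e - e0) < d -> Rabs (s - s0) < d ->
    Rabs (Hs e s - Hs e0 s0) < eps.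
Proof.
  intros [He0|[He0 Hs0]] eps Heps.
  - set (d := Rmin (e0/2) (Rmin (eps * e0 / 4) (eps * e0 * e0 / (4 * (Rabs s0 + 1))))).
    assert (Hd1 : d <= e0/2) by apply Rmin_l.
    assert (Hd2 : d <= eps * e0 / 4) by (eapply Rle_trans; [apply Rmin_r|apply Rmin_l]).
    assert (Hd3 : d <= eps * e0 * e0 / (4 * (Rabs s0 + 1))) by (eapply Rle_trans; [apply Rmin_r|apply Rmin_r]).
    assert (Hs0p : 0 <= Rabs s0) by apply Rabs_pos.
    assert (Hdp : 0 < d).
    { unfold d. apply Rmin_pos. lra. apply Rmin_pos.
      apply Rdiv_lt_0_compat; [apply Rmult_lt_0_compat|]; lra.
      apply Rdiv_lt_0_compat; [repeat apply Rmult_lt_0_compat|]; lra. }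
    exists d. split; auto. intros e s He Hee Hss.
    assert (He' : e0 / 2 < e) by (apply Rabs_def2 in Hee; lra).
    unfold Hs. destruct (Rlt_dec 0 e); [|lra]. destruct (Rlt_dec 0 e0); [|lra].
    eapply Rle_lt_trans. apply clamp_lip.
    replace (s / e - s0 / e0) with ((s - s0) / e - s0 * (e - e0) / (e * e0)) by (field; lra).
    eapply Rle_lt_trans. apply Rabs_triang. rewrite Rabs_Ropp.
    unfold Rdiv. rewrite !Rabs_mult. rewrite (Rabs_inv e), (Rabs_inv (e * e0)).
    rewrite (Rabs_pos_eq e) by lra. rewrite (Rabs_pos_eq (e * e0)) by nra.
    assert (I1 : / e <= 2 / e0).
    { replace (2 / e0) with (/ (e0 / 2)) by (field; lra). apply Rinv_le_contravar; lra. }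
    assert (I2 : / (e * e0) <= 2 / (e0 * e0)).
    { replace (2 / (e0 * e0)) with (/ (e0 / 2 * e0)) by (field; lra). apply Rinv_le_contravar. nra. nra. }
    assert (A1 : Rabs (s - s0) * / e < eps / 2).
    { apply Rle_lt_trans with (Rabs (s - s0) * (2 / e0)).
      apply Rmult_le_compat_l; auto. apply Rabs_pos.
      apply Rlt_le_trans with (eps * e0 / 4 * (2 / e0)).
      apply Rmult_lt_compat_r. apply Rdiv_lt_0_compat; lra. lra.
      right. field. lra. }
    assert (A2 : Rabs s0 * Rabs (e - e0) * / (e * e0) < eps / 2).
    { apply Rle_lt_trans with (Rabs s0 * Rabs (e - e0) * (2 / (e0 * e0))).
      apply Rmult_le_compat_l; auto. apply Rmult_le_pos; apply Rabs_pos.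
      assert (Rabs s0 * Rabs (e - e0) <= Rabs s0 * (eps * e0 * e0 / (4 * (Rabs s0 + 1)))).
      { apply Rmult_le_compat_l; auto. lra. }
      assert (Rabs s0 * (eps * e0 * e0 / (4 * (Rabs s0 + 1))) * (2 / (e0 * e0)) < eps / 2).
      { replace (Rabs s0 * (eps * e0 * e0 / (4 * (Rabs s0 + 1))) * (2 / (e0 * e0)))
          with (eps / 2 * (Rabs s0 / (Rabs s0 + 1))) by (field; lra).
        assert (Rabs s0 / (Rabs s0 + 1) < 1).
        { apply (Rmult_lt_reg_r (Rabs s0 + 1)). lra. unfold Rdiv. rewrite Rmult_assoc, Rinv_l; lra. }
        nra. }
      assert (0 < 2 / (e0 * e0)) by (apply Rdiv_lt_0_compat; nra).
      nra. }
    lra.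
  - subst e0. exists (Rabs s0 / 2). split. apply Rabs_pos_lt in Hs0. lra.
    intros e s He Hee Hss. rewrite Rminus_0_r, Rabs_pos_eq in Hee by lra.
    unfold Hs. destruct (Rlt_dec 0 0); [lra|].
    destruct (Rlt_dec 0 s0).
    + rewrite (Rabs_pos_eq s0) in Hss, Hee by lra. apply Rabs_def2 in Hss.
      assert (Hs1 : 1 = 1) by reflexivity.
      destruct (Rlt_dec 0 e).
      * unfold clamp01. assert (1 <= s / e).
        { apply (Rmult_le_reg_r e); auto. unfold Rdiv. rewrite Rmult_assoc, Rinv_l; lra. }
        rewrite Rmax_right by lra. rewrite Rmin_left by lra. rewrite Rminus_diag, Rabs_R0. lra.
      * destruct (Rlt_dec 0 s); [|lra]. rewrite Rminus_diag, Rabs_R0. lra.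
    + assert (s0 < 0) by lra. rewrite (Rabs_left s0) in Hss, Hee by lra. apply Rabs_def2 in Hss.
      destruct (Rlt_dec 0 e).
      * unfold clamp01. assert (s / e <= 0).
        { unfold Rdiv. assert (0 < / e) by (apply Rinv_0_lt_compat; auto). nra. }
        rewrite Rmax_left by lra. rewrite Rmin_right by lra. rewrite Rminus_diag, Rabs_R0. lra.
      * destruct (Rlt_dec 0 s); [lra|]. rewrite Rminus_diag, Rabs_R0. lra.
Qed.

Definition cterm (O : R -> Prop) (n : nat) (e x : R) : R :=
  if excluded_middle_informative (has_rend O (qn n)) then Hs e (x - rend O (qn n)) else 0.

Definition J (O : R -> Prop) (e x : R) : R := Series (fun n => w n * cterm O n e x).
Definition G (O : R -> Prop) (x : R) : R := atan x + J O 0 x.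

Lemma cterm_range O n e x : 0 <= cterm O n e x <= 1.
Proof. unfold cterm. destruct excluded_middle_informative. apply Hs_range. lra. Qed.

Lemma cterm_mono O n e x x' : x <= x' -> cterm O n e x <= cterm O n e x'.
Proof. intros. unfold cterm. destruct excluded_middle_informative. apply Hs_mono. lra. lra. Qed.

Lemma J_range O e x : 0 <= J O e x <= 2.
Proof. apply ser_bounds. intros; apply cterm_range. Qed.

Lemma J_mono O e x x' : x <= x' -> J O e x <= J O e x'.
Proof.
  intros H. apply ser_mono. intros n. pose proof (cterm_range O n e x). pose proof (cterm_range O n e x').
  pose proof (cterm_mono O n e x x' H). lra.
Qed.

Lemma G_strict O x x' : x < x' -> G O x < G O x'.
Proof.
  intros H. unfold G. pose proof (atan_increasing _ _ H). pose proof (J_mono O 0 x x'). lra.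
Qed.

Lemma G_bound O x : - PI / 2 < G O x < PI / 2 + 2.
Proof. unfold G. pose proof (atan_bound x). pose proof (J_range O 0 x). lra. Qed.

Section Gen.
Variable O : R -> Prop.
Hypothesis Oop : openR O.

Lemma J0_const x1 x2 : x1 <= x2 -> (forall y, x1 <= y <= x2 -> O y) -> J O 0 x2 = J O 0 x1.
Proof.
  intros H12 HO. unfold J. apply Series_ext. intros n. f_equal.
  unfold cterm. destruct excluded_middle_informative as [Hr|]; auto.
  pose proof (rend_R1 O Oop _ Hr). set (a := rend O (qn n)) in *.
  unfold Hs. destruct (Rlt_dec 0 0); [lra|].
  destruct (Rlt_le_dec a x1).
  - destruct (Rlt_dec 0 (x2 - a)); [|lra]. destruct (Rlt_dec 0 (x1 - a)); lra.
  - destruct (Rle_lt_dec a x2).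
    + exfalso. apply H. apply HO. lra.
    + destruct (Rlt_dec 0 (x2 - a)); [lra|]. destruct (Rlt_dec 0 (x1 - a)); lra.
Qed.

Lemma G_solve x1 x2 y : x1 <= x2 -> (forall z, x1 <= z <= x2 -> O z) -> G O x1 <= y <= G O x2 ->
  exists z, x1 <= z <= x2 /\ G O z = y.
Proof.
  intros H12 HO Hy.
  set (K := J O 0 x1).
  assert (HG : forall z, x1 <= z <= x2 -> G O z = atan z + K).
  { intros z Hz. unfold G, K. rewrite (J0_const x1 z); auto. lra. intros; apply HO; lra. }
  rewrite (HG x1), (HG x2) in Hy by lra.
  pose proof (atan_bound x1). pose proof (atan_bound x2).
  set (z := tan (y - K)).
  assert (Hz : atan z = y - K). { unfold z. apply atan_tan. lra. }
  assert (x1 <= z).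
  { destruct (Rle_lt_dec x1 z); auto. pose proof (atan_increasing _ _ r). lra. }
  assert (z <= x2).
  { destruct (Rle_lt_dec z x2); auto. pose proof (atan_increasing _ _ r). lra. }
  exists z. split. lra. rewrite HG by lra. lra.
Qed.

Lemma G_gap x1 x2 z : x1 < x2 -> O x1 -> O x2 -> x1 <= z <= x2 -> ~ O z ->
  exists c gam, 0 < gam /\ G O x1 < c /\ c + gam < G O x2 /\
    forall y, O y -> G O y < c \/ c + gam < G O y.
Proof.
  intros H12 H1 H2 Hz HOz.
  destruct (Oop x1 H1) as [d [Hd Hd2]].
  destruct (qn_dense x1 d Hd) as [n Hn].
  assert (HOq : O (qn n)) by (apply Hd2; apply Rabs_def1; lra).
  assert (Hzq : qn n <= z).
  { destruct (Rle_lt_dec (qn n) z); auto. exfalso. apply HOz, Hd2. apply Rabs_def1; lra. }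
  assert (Hr : has_rend O (qn n)) by (split; auto; exists z; auto).
  set (a := rend O (qn n)).
  pose proof (rend_R1 O Oop _ Hr) as Ha1. pose proof (rend_R2 O Oop _ Hr) as Ha2.
  pose proof (rend_R4 O _ Hr z Hzq HOz) as Ha4. fold a in Ha1, Ha2, Ha4.
  assert (Hax2 : a < x2). { destruct (Rle_lt_dec x2 a); auto. assert (a = x2) by lra. subst. congruence. }
  set (c := atan a + J O 0 a).
  assert (Hlow : forall y, y < a -> G O y < c).
  { intros y Hy. unfold G, c. pose proof (atan_increasing _ _ Hy). pose proof (J_mono O 0 y a). lra. }
  assert (Hup : forall y, a < y -> c + w n < G O y).
  { intros y Hy. unfold G, c. pose proof (atan_increasing _ _ Hy).
    assert (J O 0 a + w n <= J O 0 y).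
    { apply ser_jump.
      - intros m. pose proof (cterm_range O m 0 a). pose proof (cterm_range O m 0 y).
        pose proof (cterm_mono O m 0 a y). lra.
      - unfold cterm. destruct excluded_middle_informative; [|tauto]. fold a. unfold Hs.
        destruct (Rlt_dec 0 0); [lra|]. destruct (Rlt_dec 0 (a - a)); lra.
      - unfold cterm. destruct excluded_middle_informative; [|tauto]. fold a. unfold Hs.
        destruct (Rlt_dec 0 0); [lra|]. destruct (Rlt_dec 0 (y - a)); lra. }
    lra. }
  exists c, (w n). split. apply w_pos. split. apply Hlow. lra. split. apply Hup. lra.
  intros y Hy. destruct (Rtotal_order y a) as [h|[h|h]].
  - left; auto.
  - subst. tauto.
  - right; auto.
Qed.

Lemma cterm_cont n e0 x0 : (0 < e0 \/ (e0 = 0 /\ O x0)) ->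
  forall eps, 0 < eps -> exists d, 0 < d /\ forall e x, 0 <= e -> Rabs (e - e0) < d -> Rabs (x - x0) < d ->
    Rabs (cterm O n e x - cterm O n e0 x0) < eps.
Proof.
  intros H eps Heps. unfold cterm. destruct excluded_middle_informative as [Hr|].
  - set (a := rend O (qn n)). pose proof (rend_R1 O Oop _ Hr). fold a in H0.
    destruct (Hs_cont e0 (x0 - a)) with eps as [d [Hd Hd2]]; auto.
    { destruct H as [H|[H H']]; auto. right. split; auto. intros Heq. assert (x0 = a) by lra. subst. tauto. }
    exists d. split; auto. intros e x He H1 H2. apply Hd2; auto.
    replace (x - a - (x0 - a)) with (x - x0) by ring. auto.
  - exists 1. split. lra. intros. rewrite Rminus_diag, Rabs_R0. auto.
Qed.

Lemma cterm_cont_fin N e0 x0 : (0 < e0 \/ (e0 = 0 /\ O x0)) ->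
  forall eps, 0 < eps -> exists d, 0 < d /\ forall e x, 0 <= e -> Rabs (e - e0) < d -> Rabs (x - x0) < d ->
    forall m, (m <= N)%nat -> Rabs (cterm O m e x - cterm O m e0 x0) < eps.
Proof.
  intros H eps Heps. induction N.
  - destruct (cterm_cont 0 e0 x0 H eps Heps) as [d [Hd Hd2]]. exists d. split; auto.
    intros. replace m with 0%nat by lia. auto.
  - destruct IHN as [d1 [Hd1 H1]]. destruct (cterm_cont (S N) e0 x0 H eps Heps) as [d2 [Hd2 H2]].
    exists (Rmin d1 d2). split. apply Rmin_pos; auto.
    intros e x He Hee Hxx m Hm. pose proof (Rmin_l d1 d2). pose proof (Rmin_r d1 d2).
    destruct (Nat.eq_dec m (S N)). subst. apply H2; auto; lra.
    apply H1; auto; try lra. lia.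
Qed.

Lemma J_cont e0 x0 : (0 < e0 \/ (e0 = 0 /\ O x0)) ->
  forall eps, 0 < eps -> exists d, 0 < d /\ forall e x, 0 <= e -> Rabs (e - e0) < d -> Rabs (x - x0) < d ->
    Rabs (J O e x - J O e0 x0) < eps.
Proof.
  intros H eps Heps.
  destruct (pow_lt_1_zero (/2)) with (eps / 8) as [N HN]. rewrite Rabs_pos_eq; lra. lra.
  specialize (HN (S N) ltac:(lia)). rewrite Rabs_pos_eq in HN by (apply pow_le; lra).
  fold (w (S N)) in HN.
  set (eta := eps / (4 * INR (S N))).
  assert (HSN : 0 < INR (S N)) by (apply lt_0_INR; lia).
  assert (Heta : 0 < eta) by (unfold eta; apply Rdiv_lt_0_compat; lra).
  destruct (cterm_cont_fin N e0 x0 H eta Heta) as [d [Hd Hd2]].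
  exists d. split; auto. intros e x He H1 H2.
  eapply Rle_lt_trans. apply (ser_diff _ _ N eta).
  - intros; apply cterm_range.
  - intros; apply cterm_range.
  - intros m Hm. left. apply Hd2; auto.
  - pose proof (pos_INR N). replace (INR (S N) * eta) with (eps / 4) by (unfold eta; field; lra). lra.
Qed.
End Gen.

Lemma dist2_same x y c : dist2 (x, c) (y, c) = Rabs (x - y).
Proof.
  unfold dist2; cbn [fst snd]. replace ((x - y) ^ 2 + (c - c) ^ 2) with (Rsqr (x - y)) by (unfold Rsqr; ring).
  apply sqrt_Rsqr_abs.
Qed.

Lemma dist_fst p q : Rabs (fst p - fst q) <= dist2 p q.
Proof.
  unfold dist2. rewrite <- sqrt_Rsqr_abs. apply sqrt_le_1_alt. unfold Rsqr.
  pose proof (pow2_ge_0 (snd p - snd q)). simpl in *. nra.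
Qed.

Lemma dist_snd p q : Rabs (snd p - snd q) <= dist2 p q.
Proof.
  unfold dist2. rewrite <- sqrt_Rsqr_abs. apply sqrt_le_1_alt. unfold Rsqr.
  pose proof (pow2_ge_0 (fst p - fst q)). simpl in *. nra.
Qed.

Lemma dist_le p q : dist2 p q <= Rabs (fst p - fst q) + Rabs (snd p - snd q).
Proof.
  unfold dist2. rewrite <- (sqrt_pow2 (Rabs (fst p - fst q) + Rabs (snd p - snd q))).
  2:{ pose proof (Rabs_pos (fst p - fst q)). pose proof (Rabs_pos (snd p - snd q)). lra. }
  apply sqrt_le_1_alt.
  pose proof (Rabs_pos (fst p - fst q)). pose proof (Rabs_pos (snd p - snd q)).
  rewrite <- (pow2_abs (fst p - fst q)), <- (pow2_abs (snd p - snd q)). nra.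
Qed.

Definition cont2 (P : R -> R -> Prop) (f : R -> R -> R) x0 t0 :=
  forall eps, 0 < eps -> exists d, 0 < d /\ forall x t, P x t -> Rabs (x - x0) < d -> Rabs (t - t0) < d ->
    Rabs (f x t - f x0 t0) < eps.

Lemma cont2_const P c x0 t0 : cont2 P (fun _ _ => c) x0 t0.
Proof. intros eps He. exists 1. split. lra. intros. rewrite Rminus_diag, Rabs_R0. auto. Qed.

Lemma cont2_x P x0 t0 : cont2 P (fun x _ => x) x0 t0.
Proof. intros eps He. exists eps. split; auto. Qed.

Lemma cont2_t P x0 t0 : cont2 P (fun _ t => t) x0 t0.
Proof. intros eps He. exists eps. split; auto. Qed.

Lemma cont2_plus P f g x0 t0 : cont2 P f x0 t0 -> cont2 P g x0 t0 -> cont2 P (fun x t => f x t + g x t) x0 t0.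
Proof.
  intros Hf Hg eps He. destruct (Hf (eps/2)) as [d1 [Hd1 H1]]. lra. destruct (Hg (eps/2)) as [d2 [Hd2 H2]]. lra.
  exists (Rmin d1 d2). split. apply Rmin_pos; auto. intros x t HP Hx Ht.
  pose proof (Rmin_l d1 d2). pose proof (Rmin_r d1 d2).
  specialize (H1 x t HP ltac:(lra) ltac:(lra)). specialize (H2 x t HP ltac:(lra) ltac:(lra)).
  replace (f x t + g x t - (f x0 t0 + g x0 t0)) with ((f x t - f x0 t0) + (g x t - g x0 t0)) by ring.
  eapply Rle_lt_trans. apply Rabs_triang. lra.
Qed.

Lemma cont2_mult P f g x0 t0 : cont2 P f x0 t0 -> cont2 P g x0 t0 -> cont2 P (fun x t => f x t * g x t) x0 t0.
Proof.
  intros Hf Hg eps He.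
  set (Mf := Rabs (f x0 t0) + 1). set (Mg := Rabs (g x0 t0) + 1).
  assert (HMf : 0 < Mf) by (unfold Mf; pose proof (Rabs_pos (f x0 t0)); lra).
  assert (HMg : 0 < Mg) by (unfold Mg; pose proof (Rabs_pos (g x0 t0)); lra).
  destruct (Hf (eps / (2 * Mg))) as [d1 [Hd1 H1]]. apply Rdiv_lt_0_compat; lra.
  destruct (Hg (Rmin 1 (eps / (2 * Mf)))) as [d2 [Hd2 H2]]. apply Rmin_pos. lra. apply Rdiv_lt_0_compat; lra.
  exists (Rmin d1 d2). split. apply Rmin_pos; auto. intros x t HP Hx Ht.
  pose proof (Rmin_l d1 d2). pose proof (Rmin_r d1 d2).
  specialize (H1 x t HP ltac:(lra) ltac:(lra)). specialize (H2 x t HP ltac:(lra) ltac:(lra)).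
  pose proof (Rmin_l 1 (eps / (2 * Mf))). pose proof (Rmin_r 1 (eps / (2 * Mf))).
  replace (f x t * g x t - f x0 t0 * g x0 t0) with ((f x t - f x0 t0) * g x t + f x0 t0 * (g x t - g x0 t0)) by ring.
  eapply Rle_lt_trans. apply Rabs_triang. rewrite !Rabs_mult.
  assert (Rabs (g x t) <= Mg).
  { unfold Mg. replace (g x t) with (g x0 t0 + (g x t - g x0 t0)) by ring.
    eapply Rle_trans. apply Rabs_triang. lra. }
  assert (A1 : Rabs (f x t - f x0 t0) * Rabs (g x t) <= eps / (2 * Mg) * Mg).
  { apply Rmult_le_compat; try apply Rabs_pos; lra. }
  assert (A2 : Rabs (f x0 t0) * Rabs (g x t - g x0 t0) < eps / 2).
  { apply Rle_lt_trans with (Rabs (f x0 t0) * (eps / (2 * Mf))).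
    apply Rmult_le_compat_l. apply Rabs_pos. lra.
    replace (eps / 2) with (Mf * (eps / (2 * Mf))) by (field; lra).
    apply Rmult_lt_compat_r. apply Rdiv_lt_0_compat; lra. unfold Mf; lra. }
  replace (eps / (2 * Mg) * Mg) with (eps / 2) in A1 by (field; lra). lra.
Qed.

Lemma cont2_atan P x0 t0 : cont2 P (fun x _ => atan x) x0 t0.
Proof.
  intros eps He. pose proof (derivable_continuous_pt _ _ (derivable_pt_atan x0)) as Hc.
  unfold continuity_pt, continue_in, limit1_in, limit_in in Hc. simpl in Hc.
  destruct (Hc eps He) as [d [Hd H]]. exists d. split; auto.
  intros x t _ Hx _. unfold R_dist in H. destruct (Req_dec x x0). subst. rewrite Rminus_diag, Rabs_R0; auto.
  apply H. split; auto. unfold D_x, no_cond. split; auto.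
Qed.

Section Main.
Variables (S : pt -> Prop) (u v : R).
Hypothesis HS : is_strip S u v.

Definition Ao := fun x => S (x, u).
Definition Bo := fun x => S (x, v).

Lemma uv : u < v.
Proof. apply HS. Qed.

Lemma S_band p : S p -> u <= snd p <= v.
Proof. intros H. destruct HS as [_ [_ [H2 _]]]. apply H2; auto. Qed.

Lemma S_int x t : u < t < v -> S (x, t).
Proof. intros H. destruct HS as [_ [H1 _]]. apply H1. simpl; auto. Qed.

Lemma bnd_open c : (c = u \/ c = v) -> openR (fun x => S (x, c)).
Proof.
  intros Hc x Hx. destruct HS as [Huv [_ [_ H3]]]. destruct (H3 _ Hx) as [e [He H]].
  exists e. split; auto. intros y Hy. apply H. unfold band; simpl. destruct Hc; subst; lra.
  rewrite dist2_same. rewrite Rabs_minus_sym. auto.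
Qed.

Definition lam t := (v - t) / (v - u).

Definition F (x t : R) : R :=
  atan x + (t - u) * (v - t) * x + lam t * J Ao (t - u) x + (1 - lam t) * J Bo (v - t) x.

Lemma lam_range t : u <= t <= v -> 0 <= lam t <= 1.
Proof.
  intros H. pose proof uv. unfold lam. split.
  apply Rdiv_le_0_compat; lra.
  apply (Rmult_le_reg_r (v - u)). lra. unfold Rdiv. rewrite Rmult_assoc, Rinv_l; lra.
Qed.

Lemma F_u x : F x u = G Ao x.
Proof.
  pose proof uv. unfold F, G, lam. replace (u - u) with 0 by ring.
  replace ((v - u) / (v - u)) with 1 by (field; lra). ring.
Qed.

Lemma F_v x : F x v = G Bo x.
Proof.
  pose proof uv. unfold F, G, lam. replace (v - v) with 0 by ring.
  replace (0 / (v - u)) with 0 by (field; lra). ring.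
Qed.

Lemma F_strict t x x' : u <= t <= v -> x < x' -> F x t < F x' t.
Proof.
  intros Ht H. unfold F. pose proof (lam_range t Ht).
  pose proof (atan_increasing _ _ H).
  pose proof (J_mono Ao (t - u) x x' ltac:(lra)). pose proof (J_mono Bo (v - t) x x' ltac:(lra)).
  assert (0 <= (t - u) * (v - t)) by (apply Rmult_le_pos; lra).
  assert (0 <= (t - u) * (v - t) * (x' - x)) by (apply Rmult_le_pos; lra).
  assert (0 <= lam t * (J Ao (t - u) x' - J Ao (t - u) x)) by (apply Rmult_le_pos; lra).
  assert (0 <= (1 - lam t) * (J Bo (v - t) x' - J Bo (v - t) x)) by (apply Rmult_le_pos; lra).
  nra.
Qed.

Lemma F_le t x x' : u <= t <= v -> x <= x' -> F x t <= F x' t.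
Proof. intros Ht H. destruct H. left; apply F_strict; auto. subst; lra. Qed.

Lemma F_bounds t x : u <= t <= v ->
  atan x + (t - u) * (v - t) * x <= F x t <= atan x + (t - u) * (v - t) * x + 2.
Proof.
  intros Ht. unfold F. pose proof (lam_range t Ht).
  pose proof (J_range Ao (t - u) x). pose proof (J_range Bo (v - t) x).
  assert (0 <= lam t * J Ao (t - u) x <= lam t * 2) by (split; [apply Rmult_le_pos|apply Rmult_le_compat_l]; lra).
  assert (0 <= (1 - lam t) * J Bo (v - t) x <= (1 - lam t) * 2) by (split; [apply Rmult_le_pos|apply Rmult_le_compat_l]; lra).
  lra.
Qed.

Definition PS := fun x t => S (x, t).

Lemma cont2_tf P (h : R -> R) x0 t0 : continuity_pt h t0 -> cont2 P (fun _ t => h t) x0 t0.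
Proof.
  intros Hc eps He.
  unfold continuity_pt, continue_in, limit1_in, limit_in in Hc. simpl in Hc.
  destruct (Hc eps He) as [d [Hd H]]. exists d. split; auto.
  intros x t _ _ Ht. unfold R_dist in H. destruct (Req_dec t t0). subst. rewrite Rminus_diag, Rabs_R0; auto.
  apply H. split; auto. unfold D_x, no_cond. split; auto.
Qed.

Lemma F_cont x0 t0 : S (x0, t0) -> cont2 PS F x0 t0.
Proof.
  intros H0. pose proof uv. pose proof (S_band _ H0) as Hb; simpl in Hb.
  unfold F. apply cont2_plus; [apply cont2_plus; [apply cont2_plus|]|].
  - apply cont2_atan.
  - apply (cont2_mult _ (fun _ t => (t - u) * (v - t)) (fun x _ => x)); [|apply cont2_x].
    apply (cont2_tf _ (fun t => (t - u) * (v - t))). reg.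
  - apply (cont2_mult _ (fun _ t => lam t) (fun x t => J Ao (t - u) x)).
    + apply cont2_tf. unfold lam. reg.
    + intros eps He.
      destruct (J_cont Ao (bnd_open u (or_introl eq_refl)) (t0 - u) x0) with eps as [d [Hd Hd2]]; auto.
      { destruct (Rle_lt_dec t0 u). right. split. lra. unfold Ao. replace u with t0 by lra. auto. left; lra. }
      exists d. split; auto. intros x t HP Hx Ht. apply Hd2; auto.
      pose proof (S_band _ HP); simpl in *; lra.
      replace (t - u - (t0 - u)) with (t - t0) by ring. auto.
  - apply (cont2_mult _ (fun _ t => 1 - lam t) (fun x t => J Bo (v - t) x)).
    + apply (cont2_tf _ (fun t => 1 - lam t)). unfold lam. reg.
    + intros eps He.
      destruct (J_cont Bo (bnd_open v (or_intror eq_refl)) (v - t0) x0) with eps as [d [Hd Hd2]]; auto.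
      { destruct (Rle_lt_dec v t0). right. split. lra. unfold Bo. replace v with t0 by lra. auto. left; lra. }
      exists d. split; auto. intros x t HP Hx Ht. apply Hd2; auto.
      pose proof (S_band _ HP); simpl in *; lra.
      replace (v - t - (v - t0)) with (- (t - t0)) by ring. rewrite Rabs_Ropp. auto.
Qed.

Lemma F_surj t y : u < t < v -> exists x, F x t = y.
Proof.
  intros Ht. pose proof PI_4. pose proof PI_RGT_0.
  set (k := (t - u) * (v - t)).
  assert (Hk : 0 < k) by (unfold k; apply Rmult_lt_0_compat; lra).
  set (a := (y - 10) / k). set (b := (y + 10) / k).
  assert (Ha : k * a = y - 10) by (unfold a; field; lra).
  assert (Hb : k * b = y + 10) by (unfold b; field; lra).
  assert (Hab : a < b). { apply (Rmult_lt_reg_l k); auto. lra. }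
  pose proof (F_bounds t a ltac:(lra)). pose proof (F_bounds t b ltac:(lra)).
  pose proof (atan_bound a). pose proof (atan_bound b). fold k in H1, H2.
  destruct (Ranalysis5.IVT_interv (fun z => F z t - y) a b) as [z [Hz1 Hz2]]; auto.
  - intros a0 _. unfold continuity_pt, continue_in, limit1_in, limit_in. simpl.
    intros eps He. destruct (F_cont a0 t (S_int a0 t Ht) eps He) as [d [Hd H5]].
    exists d. split; auto. intros x [_ Hx]. unfold R_dist in *.
    replace (F x t - y - (F a0 t - y)) with (F x t - F a0 t) by ring.
    apply H5; auto. apply S_int; auto. rewrite Rminus_diag, Rabs_R0; auto.
  - simpl. rewrite Rmult_comm in Ha. lra.
  - simpl. rewrite Rmult_comm in Hb. lra.
  - exists z. lra.
Qed.

Definition h (p : pt) : pt := (F (fst p) (snd p), snd p).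
Definition S' (q : pt) : Prop := exists p, S p /\ h p = q.
Definition g (q : pt) : pt :=
  match excluded_middle_informative (exists p, S p /\ h p = q) with
  | left H => proj1_sig (constructive_indefinite_description _ H)
  | right _ => q end.

Lemma g_spec q : S' q -> S (g q) /\ h (g q) = q.
Proof.
  intros H. unfold g. destruct excluded_middle_informative; [|tauto].
  apply (proj2_sig (constructive_indefinite_description _ e)).
Qed.

Lemma h_inj p p' : S p -> S p' -> h p = h p' -> p = p'.
Proof.
  intros H H' E. destruct p as [x t]; destruct p' as [x' t']. unfold h in E; simpl in E.
  injection E; intros E2 E1. subst t'. pose proof (S_band _ H); simpl in *.
  destruct (Rtotal_order x x') as [l|[l|l]].
  - pose proof (F_strict t x x' H0 l). lra.
  - subst; auto.
  - pose proof (F_strict t x' x H0 l). lra.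
Qed.

Lemma S'_int y t : u < t < v -> S' (y, t).
Proof.
  intros Ht. destruct (F_surj t y Ht) as [x Hx]. exists (x, t). split. apply S_int; auto.
  unfold h; simpl. rewrite Hx; auto.
Qed.

Lemma S'_band q : S' q -> u <= snd q <= v.
Proof. intros [p [Hp E]]. subst. unfold h; simpl. apply S_band; auto. Qed.

Definition bd (c : R) (O : R -> Prop) : Prop :=
  (c = u \/ c = v) /\ (forall x, S (x, c) <-> O x) /\ (forall x, F x c = G O x) /\ openR O /\
  (forall y, S' (y, c) <-> exists x, O x /\ G O x = y).

Lemma bd_ex c : (c = u \/ c = v) -> exists O, bd c O.
Proof.
  intros Hc. pose proof uv.
  assert (Gen : forall O, (forall x, S (x, c) <-> O x) -> (forall x, F x c = G O x) -> openR O -> bd c O).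
  { intros O H1 H2 H3. split; auto. split; auto. split; auto. split; auto.
    intros y. split.
    - intros [p [Hp E]]. destruct p as [x t]. unfold h in E; simpl in E. injection E; intros; subst.
      exists x. split. apply H1; auto. rewrite <- H2. auto.
    - intros [x [Hx E]]. exists (x, c). split. apply H1; auto. unfold h; simpl. rewrite H2, E. auto. }
  destruct Hc as [Hc|Hc]; subst c.
  - exists Ao. apply Gen. unfold Ao; tauto. apply F_u. apply (bnd_open u (or_introl eq_refl)).
  - exists Bo. apply Gen. unfold Bo; tauto. apply F_v. apply (bnd_open v (or_intror eq_refl)).
Qed.


Lemma S'_open_bd c O x : bd c O -> O x ->
  exists eps, 0 < eps /\ forall q, band u v q -> dist2 (h (x, c)) q < eps -> S' q.
Proof.
  intros [Hc [HO1 [HO2 [HO3 HO4]]]] Hx. pose proof uv.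
  destruct (HO3 x Hx) as [d [Hd Hd2]].
  set (x1 := x - d / 2). set (x2 := x + d / 2).
  assert (Hin : forall z, x1 <= z <= x2 -> O z).
  { intros z Hz. apply Hd2. unfold x1, x2 in Hz. apply Rabs_def1; lra. }
  pose proof (G_strict O x1 x ltac:(unfold x1; lra)). pose proof (G_strict O x x2 ltac:(unfold x2; lra)).
  set (eps := Rmin (v - u) (Rmin (G O x - G O x1) (G O x2 - G O x))).
  assert (He1 : eps <= v - u) by apply Rmin_l.
  assert (He2 : eps <= G O x - G O x1) by (eapply Rle_trans; [apply Rmin_r|apply Rmin_l]).
  assert (He3 : eps <= G O x2 - G O x) by (eapply Rle_trans; [apply Rmin_r|apply Rmin_r]).
  exists eps. split. unfold eps. apply Rmin_pos. lra. apply Rmin_pos; lra.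
  intros [y s] Hbq Hdist. unfold band in Hbq; simpl in Hbq.
  pose proof (dist_snd (h (x, c)) (y, s)) as Hs. pose proof (dist_fst (h (x, c)) (y, s)) as Hf.
  unfold h in Hs, Hf, Hdist; simpl in Hs, Hf, Hdist. rewrite HO2 in Hf, Hs, Hdist.
  destruct (Req_dec s c) as [E|E].
  - subst s. apply HO4. destruct (G_solve O HO3 x1 x2 y) as [z [Hz1 Hz2]].
    + unfold x1, x2; lra.
    + auto.
    + assert (Hgy : Rabs (G O x - y) < eps) by lra. apply Rabs_def2 in Hgy. lra.
    + exists z. split; auto.
  - apply S'_int. assert (Hcs : Rabs (c - s) < v - u) by lra. apply Rabs_def2 in Hcs.
    destruct Hc; subst c; lra.
Qed.

Lemma S'_strip : is_strip S' u v.
Proof.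
  pose proof uv as Huv. split; auto. split.
  { intros [y t] Ht. simpl in Ht. apply S'_int; auto. }
  split.
  { intros q Hq. apply S'_band; auto. }
  intros q [p [Hp E]]. subst q. destruct p as [x t].
  pose proof (S_band _ Hp) as Hb; simpl in Hb.
  destruct (Rlt_le_dec u t) as [Hut|Hut]; [destruct (Rlt_le_dec t v) as [Htv|Htv]|].
  - exists (Rmin (t - u) (v - t)). split. apply Rmin_pos; lra.
    intros [y s] Hbq Hd. pose proof (dist_snd (h (x, t)) (y, s)) as Hs. unfold h in Hs, Hd; simpl in Hs, Hd.
    pose proof (Rmin_l (t - u) (v - t)). pose proof (Rmin_r (t - u) (v - t)).
    apply S'_int. assert (Hts : Rabs (t - s) < Rmin (t - u) (v - t)) by lra. apply Rabs_def2 in Hts. lra.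
  - assert (t = v) by lra. subst t.
    destruct (bd_ex v (or_intror eq_refl)) as [O HO].
    apply (S'_open_bd v O); auto. apply HO; auto.
  - assert (t = u) by lra. subst t.
    destruct (bd_ex u (or_introl eq_refl)) as [O HO].
    apply (S'_open_bd u O); auto. apply HO; auto.
Qed.

Lemma interval_union (I K : R -> Prop) a : is_interval I -> is_interval K -> I a -> K a ->
  is_interval (fun x => I x \/ K x).
Proof.
  intros HI HK Ia Ka p q x Hp Hq Hx.
  destruct (Rle_lt_dec x a).
  - destruct Hp as [Hp|Hp].
    + left. apply (HI p a); auto. lra.
    + right. apply (HK p a); auto. lra.
  - destruct Hq as [Hq|Hq].
    + left. apply (HI a q); auto. lra.
    + right. apply (HK a q); auto. lra.
Qed.

Lemma cinterval_is a b : is_interval (fun x => a <= x <= b).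
Proof. intros p q x Hp Hq Hx. lra. Qed.

Definition maxint c (I : R -> Prop) := forall K : R -> Prop, is_interval K -> (forall x, I x -> K x) ->
        (forall x, K x -> S' (x, c)) -> forall x, K x -> I x.

Lemma sep_core c O (I1 I2 : R -> Prop) x1 x2 : bd c O -> is_interval I1 -> is_interval I2 ->
  (forall y, I1 y -> S' (y, c)) -> (forall y, I2 y -> S' (y, c)) -> maxint c I1 ->
  (forall y, I1 y -> I2 y -> False) -> O x1 -> O x2 -> x1 < x2 -> I1 (G O x1) -> I2 (G O x2) ->
  exists c0 gam, 0 < gam /\ (forall y, I1 y -> y < c0) /\ (forall y, I2 y -> c0 + gam < y).
Proof.
  intros [Hc [HO1 [HO2 [HO3 HO4]]]] HI1 HI2 HS1 HS2 Hm1 Hdis Hx1 Hx2 H12 Hy1 Hy2.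
  destruct (classic (exists z, x1 <= z <= x2 /\ ~ O z)) as [[z [Hz1 Hz2]]|Hn].
  - destruct (G_gap O HO3 x1 x2 z) as [c0 [gam [Hg [Hg1 [Hg2 Hg3]]]]]; auto.
    exists c0, gam. split; auto. split.
    + intros y Hy. destruct (Rlt_le_dec y c0); auto. exfalso.
      assert (I1 c0) by (apply (HI1 (G O x1) y); auto; lra).
      destruct (proj1 (HO4 c0) (HS1 _ H)) as [w [Hw1 Hw2]].
      destruct (Hg3 w Hw1); lra.
    + intros y Hy. destruct (Rlt_le_dec (c0 + gam) y); auto. exfalso.
      assert (I2 (c0 + gam)) by (apply (HI2 y (G O x2)); auto; lra).
      destruct (proj1 (HO4 (c0 + gam)) (HS2 _ H)) as [w [Hw1 Hw2]].
      destruct (Hg3 w Hw1); lra.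
  - exfalso.
    assert (Hall : forall z, x1 <= z <= x2 -> O z).
    { intros z Hz. apply NNPP. intros Hz'. apply Hn. exists z. auto. }
    pose proof (G_strict O x1 x2 H12).
    set (K := fun y => I1 y \/ (G O x1 <= y <= G O x2)).
    assert (HK : is_interval K).
    { apply (interval_union I1 _ (G O x1)); auto. apply cinterval_is. lra. }
    assert (I1 (G O x2)).
    { apply (Hm1 K HK). intros; left; auto.
      intros y [Hy|Hy]. apply HS1; auto.
      apply HO4. destruct (G_solve O HO3 x1 x2 y) as [z [Hz1 Hz2]]; auto. lra. exists z. split; auto.
      right. lra. }
    apply (Hdis _ H0 Hy2).
Qed.

Lemma closure_snd L c p : band_closure u v L p -> (forall q, L q -> snd q = c) -> snd p = c.
Proof.
  intros [_ Hcl] HL. destruct (Req_dec (snd p) c) as [E|E]; auto. exfalso.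
  assert (Hpos : 0 < Rabs (snd p - c)) by (apply Rabs_pos_lt; lra).
  destruct (Hcl _ Hpos) as [q [Hq Hd]]. pose proof (dist_snd p q). rewrite (HL q Hq) in H. lra.
Qed.

Lemma closure_sep (L1 L2 : pt -> Prop) c (I1 I2 : R -> Prop) c0 gam p : 0 < gam ->
  (forall q, L1 q <-> snd q = c /\ I1 (fst q)) -> (forall q, L2 q <-> snd q = c /\ I2 (fst q)) ->
  (forall y, I1 y -> y < c0) -> (forall y, I2 y -> c0 + gam < y) ->
  band_closure u v L1 p -> band_closure u v L2 p -> False.
Proof.
  intros Hg H1 H2 Hs1 Hs2 [_ C1] [_ C2].
  destruct (C1 (gam / 2)) as [q1 [Hq1 Hd1]]. lra.
  destruct (C2 (gam / 2)) as [q2 [Hq2 Hd2]]. lra.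
  apply H1 in Hq1. apply H2 in Hq2.
  pose proof (Hs1 _ (proj2 Hq1)). pose proof (Hs2 _ (proj2 Hq2)).
  pose proof (dist_fst p q1). pose proof (dist_fst p q2).
  assert (Hx : Rabs (fst p - fst q1) < gam / 2) by lra. assert (Hy : Rabs (fst p - fst q2) < gam / 2) by lra.
  apply Rabs_def2 in Hx. apply Rabs_def2 in Hy. lra.
Qed.

Lemma S'_model : is_model_strip S' u v.
Proof.
  pose proof uv as Huv. split. apply S'_strip. split.
  - intros L [c [I [Hc [HI [Hne [HIS [Hmax HL]]]]]]].
    exists 4. intros p Hp. apply HL in Hp. destruct Hp as [Hp1 Hp2].
    destruct (bd_ex c Hc) as [O [_ [_ [_ [_ HO4]]]]].
    destruct (proj1 (HO4 _) (HIS _ Hp2)) as [x [_ Hx]]. pose proof (G_bound O x). pose proof PI_4. pose proof PI_RGT_0.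
    rewrite <- Hx. apply Rabs_le. lra.
  - intros L1 L2 [c1 [I1 [Hc1 [HI1 [Hne1 [HIS1 [Hmax1 HL1]]]]]]] [c2 [I2 [Hc2 [HI2 [Hne2 [HIS2 [Hmax2 HL2]]]]]]] Hdist p [Cl1 Cl2].
    assert (E1 : snd p = c1) by (apply (closure_snd L1); auto; intros q Hq; apply HL1; auto).
    assert (E2 : snd p = c2) by (apply (closure_snd L2); auto; intros q Hq; apply HL2; auto).
    rewrite E1 in E2. subst c2. set (c := c1) in *.
    assert (Hdis : forall y, I1 y -> I2 y -> False).
    { intros y Hy1 Hy2.
      set (K := fun x => I1 x \/ I2 x).
      assert (HK : is_interval K) by (apply (interval_union I1 I2 y); auto).
      assert (HKS : forall x, K x -> S' (x, c)) by (intros x [Hx|Hx]; auto).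
      assert (A12 : forall x, I2 x -> I1 x) by (intros x Hx; apply (Hmax1 K HK); [intros z Hz; left; exact Hz | exact HKS | right; exact Hx]).
      assert (A21 : forall x, I1 x -> I2 x) by (intros x Hx; apply (Hmax2 K HK); [intros z Hz; right; exact Hz | exact HKS | left; exact Hx]).
      destruct Hdist as [q [[Hq1 Hq2]|[Hq1 Hq2]]].
      - apply Hq2. apply HL2. apply HL1 in Hq1. destruct Hq1; split; auto.
      - apply Hq2. apply HL1. apply HL2 in Hq1. destruct Hq1; split; auto. }
    destruct (bd_ex c Hc1) as [O HO]. pose proof HO as [_ [_ [_ [_ HO4]]]].
    destruct Hne1 as [y1 Hy1]. destruct Hne2 as [y2 Hy2].
    destruct (proj1 (HO4 _) (HIS1 _ Hy1)) as [x1 [Hx1 Ex1]].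
    destruct (proj1 (HO4 _) (HIS2 _ Hy2)) as [x2 [Hx2 Ex2]].
    destruct (Rtotal_order x1 x2) as [l|[l|l]].
    + destruct (sep_core c O I1 I2 x1 x2) as [c0 [gam [Hg [Hs1 Hs2]]]]; auto; try congruence.
      apply (closure_sep L1 L2 c I1 I2 c0 gam p); auto.
    + subst x2. apply (Hdis y1 Hy1). rewrite <- Ex1, Ex2. auto.
    + destruct (sep_core c O I2 I1 x2 x1) as [c0 [gam [Hg [Hs1 Hs2]]]]; auto; try congruence.
      intros y a b; apply (Hdis y); auto.
      apply (closure_sep L2 L1 c I2 I1 c0 gam p); auto.
Qed.

Lemma h_cont : continuous_on S h.
Proof.
  intros [x0 t0] Hp eps He.
  destruct (F_cont x0 t0 Hp (eps / 2)) as [d [Hd Hd2]]. lra.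
  exists (Rmin d (eps / 2)). split. apply Rmin_pos; lra.
  intros [x t] Hq Hdist. pose proof (Rmin_l d (eps / 2)). pose proof (Rmin_r d (eps / 2)).
  pose proof (dist_fst (x0, t0) (x, t)) as D1. pose proof (dist_snd (x0, t0) (x, t)) as D2. simpl in D1, D2.
  eapply Rle_lt_trans. apply dist_le. unfold h; simpl.
  assert (Rabs (F x t - F x0 t0) < eps / 2).
  { apply Hd2. apply Hq. rewrite Rabs_minus_sym; lra. rewrite Rabs_minus_sym; lra. }
  rewrite Rabs_minus_sym. lra.
Qed.

Lemma g_cont : continuous_on S' g.
Proof.
  intros q0 Hq0 eps He. pose proof uv as Huv.
  destruct (g_spec q0 Hq0) as [Hp0 Eq0].
  remember (g q0) as p0 eqn:Ep0. destruct p0 as [x0 t0].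
  pose proof (S_band _ Hp0) as Hb0; simpl in Hb0.
  assert (Hd0 : exists d0, 0 < d0 /\ d0 <= eps / 2 /\ S (x0 - d0, t0) /\ S (x0 + d0, t0)).
  { destruct (Rlt_le_dec u t0); [destruct (Rlt_le_dec t0 v)|].
    - exists (eps / 2). repeat split; try lra; apply S_int; lra.
    - assert (t0 = v) by lra. subst t0.
      destruct (bnd_open v (or_intror eq_refl) x0 Hp0) as [d [Hd Hd2]].
      exists (Rmin (eps / 2) (d / 2)). pose proof (Rmin_l (eps / 2) (d / 2)). pose proof (Rmin_r (eps / 2) (d / 2)).
      assert (0 < Rmin (eps / 2) (d / 2)) by (apply Rmin_pos; lra).
      repeat split; try lra; apply Hd2; apply Rabs_def1; lra.
    - assert (t0 = u) by lra. subst t0.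
      destruct (bnd_open u (or_introl eq_refl) x0 Hp0) as [d [Hd Hd2]].
      exists (Rmin (eps / 2) (d / 2)). pose proof (Rmin_l (eps / 2) (d / 2)). pose proof (Rmin_r (eps / 2) (d / 2)).
      assert (0 < Rmin (eps / 2) (d / 2)) by (apply Rmin_pos; lra).
      repeat split; try lra; apply Hd2; apply Rabs_def1; lra. }
  destruct Hd0 as [d0 [Hd0 [Hd0e [Hl Hr]]]].
  set (xl := x0 - d0) in *. set (xr := x0 + d0) in *.
  pose proof (F_strict t0 xl x0 Hb0 ltac:(unfold xl; lra)).
  pose proof (F_strict t0 x0 xr Hb0 ltac:(unfold xr; lra)).
  set (m := Rmin (F x0 t0 - F xl t0) (F xr t0 - F x0 t0)).
  assert (Hm : 0 < m) by (apply Rmin_pos; lra).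
  assert (Hm1 : m <= F x0 t0 - F xl t0) by apply Rmin_l.
  assert (Hm2 : m <= F xr t0 - F x0 t0) by apply Rmin_r.
  destruct (F_cont xl t0 Hl (m / 2)) as [dl [Hdl Hdl2]]. lra.
  destruct (F_cont xr t0 Hr (m / 2)) as [dr [Hdr Hdr2]]. lra.
  assert (Htb : exists tb, 0 < tb /\ forall t, u <= t <= v -> Rabs (t - t0) < tb -> t = t0 \/ u < t < v).
  { destruct (Rlt_le_dec u t0); [destruct (Rlt_le_dec t0 v)|].
    - exists (Rmin (t0 - u) (v - t0)). split. apply Rmin_pos; lra.
      intros t Ht Htt. pose proof (Rmin_l (t0 - u) (v - t0)). pose proof (Rmin_r (t0 - u) (v - t0)).
      right. apply Rabs_def2 in Htt. lra.
    - exists (v - u). split. lra. intros t Ht Htt. apply Rabs_def2 in Htt.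
      destruct (Req_dec t t0); auto. right; lra.
    - exists (v - u). split. lra. intros t Ht Htt. apply Rabs_def2 in Htt.
      destruct (Req_dec t t0); auto. right; lra. }
  destruct Htb as [tb [Htb Htb2]].
  set (del := Rmin (Rmin dl dr) (Rmin (eps / 2) (Rmin (m / 2) tb))).
  assert (Hdel : 0 < del).
  { unfold del. apply Rmin_pos; apply Rmin_pos; try lra. apply Rmin_pos; lra. }
  assert (D1 : del <= dl) by (unfold del; eapply Rle_trans; [apply Rmin_l|apply Rmin_l]).
  assert (D2 : del <= dr) by (unfold del; eapply Rle_trans; [apply Rmin_l|apply Rmin_r]).
  assert (D3 : del <= eps / 2) by (unfold del; eapply Rle_trans; [apply Rmin_r|apply Rmin_l]).
  assert (D4 : del <= m / 2) by (unfold del; eapply Rle_trans; [apply Rmin_r|]; eapply Rle_trans; [apply Rmin_r|apply Rmin_l]).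
  assert (D5 : del <= tb) by (unfold del; eapply Rle_trans; [apply Rmin_r|]; eapply Rle_trans; [apply Rmin_r|apply Rmin_r]).
  exists del. split; auto. intros q Hq Hdist.
  destruct (g_spec q Hq) as [Hp Eq]. destruct (g q) as [x t] eqn:Eg.
  pose proof (S_band _ Hp) as Hb; simpl in Hb.
  rewrite <- Eq0, <- Eq in Hdist. unfold h in Hdist; simpl in Hdist.
  pose proof (dist_fst (F x0 t0, t0) (F x t, t)) as G1. pose proof (dist_snd (F x0 t0, t0) (F x t, t)) as G2.
  simpl in G1, G2.
  assert (Ht : Rabs (t - t0) < del) by (rewrite Rabs_minus_sym; lra).
  assert (HF : Rabs (F x0 t0 - F x t) < del) by lra.
  apply Rabs_def2 in HF.
  assert (HSt : forall y, S (y, t0) -> S (y, t)).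
  { intros y Hy. destruct (Htb2 t Hb ltac:(lra)) as [E|E]. subst; auto. apply S_int; auto. }
  assert (Cl : Rabs (F xl t - F xl t0) < m / 2) by (apply Hdl2; [apply HSt; auto | rewrite Rminus_diag, Rabs_R0; lra | lra]).
  assert (Cr : Rabs (F xr t - F xr t0) < m / 2) by (apply Hdr2; [apply HSt; auto | rewrite Rminus_diag, Rabs_R0; lra | lra]).
  apply Rabs_def2 in Cl. apply Rabs_def2 in Cr.
  assert (Hxl : xl < x).
  { destruct (Rlt_le_dec xl x); auto. pose proof (F_le t x xl Hb r). lra. }
  assert (Hxr : x < xr).
  { destruct (Rlt_le_dec x xr); auto. pose proof (F_le t xr x Hb r). lra. }
  eapply Rle_lt_trans. apply dist_le. simpl.
  assert (Rabs (x0 - x) < eps / 2) by (apply Rabs_def1; unfold xl, xr in *; lra).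
  rewrite Rabs_minus_sym in Ht. lra.
Qed.

Lemma between_or O a b : openR O -> O a -> O b -> a < b ->
  (forall z, a <= z <= b -> O z) \/ exists c0, G O a < c0 < G O b /\ forall y, O y -> G O y <> c0.
Proof.
  intros Oop Ha Hb Hab.
  destruct (classic (exists z, a <= z <= b /\ ~ O z)) as [[z [Hz1 Hz2]]|Hn].
  - right. destruct (G_gap O Oop a b z) as [c0 [gam [Hg [Hg1 [Hg2 Hg3]]]]]; auto.
    exists c0. split. lra. intros y Hy E. destruct (Hg3 y Hy); lra.
  - left. intros z Hz. apply NNPP. intros Hz'. apply Hn. exists z. auto.
Qed.

Lemma leaves_ok L : leaf S u v L ->
  exists L', leaf S' u v L' /\ forall q, L' q <-> exists p, L p /\ h p = q.
Proof.
  intros [[t [Ht HL]]|[c [I [Hc [HI [Hne [HIS [Hmax HL]]]]]]]].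
  - exists L. split. left. exists t. split; auto.
    intros [y s]. split.
    + intros Hq. apply HL in Hq. simpl in Hq. subst s. destruct (F_surj t y Ht) as [x Hx].
      exists (x, t). split. apply HL; auto. unfold h; simpl; rewrite Hx; auto.
    + intros [p [Hp E]]. apply HL. apply HL in Hp. rewrite <- E. unfold h; simpl. auto.
  - destruct (bd_ex c Hc) as [O [_ [HO1 [HO2 [HO3 HO4]]]]].
    set (I' := fun y => exists x, I x /\ G O x = y).
    assert (HIO : forall x, I x -> O x) by (intros; apply HO1; auto).
    exists (fun q => snd q = c /\ I' (fst q)). split.
    + right. exists c, I'. split; auto. split; [|split; [|split; [|split]]].
      * intros y1 y2 y [x1 [Hx1 E1]] [x2 [Hx2 E2]] Hy. subst y1 y2.
        assert (x1 <= x2).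
        { destruct (Rle_lt_dec x1 x2); auto. pose proof (G_strict O x2 x1 r). lra. }
        destruct (G_solve O HO3 x1 x2 y) as [z [Hz1 Hz2]]; auto.
        intros z Hz. apply HIO. apply (HI x1 x2); auto.
        exists z. split; auto. apply (HI x1 x2); auto.
      * destruct Hne as [x Hx]. exists (G O x). exists x. auto.
      * intros y [x [Hx E]]. apply HO4. exists x. auto.
      * intros K HK HIK HKS y Hy.
        destruct (proj1 (HO4 y) (HKS y Hy)) as [w [Hw E]]. subst y.
        destruct Hne as [x0 Hx0].
        assert (HK0 : K (G O x0)) by (apply HIK; exists x0; auto).
        assert (Gen : forall a b, a < b -> (x0 = a /\ w = b \/ x0 = b /\ w = a) -> I w).
        { intros a b Hab Hcase.
          assert (Ha : O a) by (destruct Hcase as [[E1 E2]|[E1 E2]]; subst; auto).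
          assert (Hb : O b) by (destruct Hcase as [[E1 E2]|[E1 E2]]; subst; auto).
          assert (Ka : K (G O a)) by (destruct Hcase as [[E1 E2]|[E1 E2]]; subst; auto).
          assert (Kb : K (G O b)) by (destruct Hcase as [[E1 E2]|[E1 E2]]; subst; auto).
          destruct (between_or O a b HO3 Ha Hb Hab) as [Hall|[c0 [Hc0 Hc0']]].
          - set (K2 := fun x => I x \/ (a <= x <= b)).
            assert (HK2 : is_interval K2).
            { apply (interval_union I _ x0); auto. apply cinterval_is.
              destruct Hcase as [[E1 E2]|[E1 E2]]; subst; lra. }
            apply (Hmax K2 HK2). intros; left; auto.
            intros x [Hx|Hx]. apply HIS; auto. apply HO1. apply Hall; auto.
            right. destruct Hcase as [[E1 E2]|[E1 E2]]; subst; lra.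
          - exfalso. assert (K c0) by (apply (HK (G O a) (G O b)); auto; lra).
            destruct (proj1 (HO4 c0) (HKS c0 H)) as [w' [Hw' E']]. apply (Hc0' w' Hw' E'). }
        exists w. split; auto.
        destruct (Rtotal_order x0 w) as [l|[l|l]].
        -- apply (Gen x0 w l). left; auto.
        -- subst; auto.
        -- apply (Gen w x0 l). right; auto.
      * intros q. tauto.
    + intros [y s]. simpl. split.
      * intros [E [x [Hx Ex]]]. subst s y. exists (x, c). split. apply HL. simpl. auto.
        unfold h; simpl. rewrite HO2. auto.
      * intros [[x t] [Hp E]]. apply HL in Hp. simpl in Hp. destruct Hp as [Ht Hx]. subst t.
        unfold h in E; simpl in E. injection E; intros E1 E2. subst. split; auto. exists x. split; auto.
Qed.
End Main.

Theorem mainTheorem1 (S : pt -> Prop) (u v : R) :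
  is_strip S u v ->
  exists (S' : pt -> Prop) (u' v' : R) (h g : pt -> pt),
    is_model_strip S' u' v' /\
    homeomorphism S S' h g /\
    (forall L, leaf S u v L ->
       exists L', leaf S' u' v' L' /\
         forall q, L' q <-> exists p, L p /\ h p = q).
Proof.
  intros HS. exists (S' S u v), u, v, (h S u v), (g S u v).
  split. apply S'_model; auto.
  split.
  - split; [|split; [|split; [|split; [|split]]]].
    + intros p Hp. exists p. auto.
    + intros q Hq. apply (g_spec S u v); auto.
    + intros p Hp. assert (Hq : S' S u v (h S u v p)) by (exists p; auto).
      destruct (g_spec S u v _ Hq) as [H1 H2]. apply (h_inj S u v HS); auto.
    + intros q Hq. apply (g_spec S u v); auto.
    + apply h_cont; auto.
    + apply g_cont; auto.
  - apply leaves_ok; auto.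
Qed.
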